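(* Let $c \geq 1$ and let $\Gamma \subset \mathbb{P}^c$ be a finite set of $d$ points in linear semi-uniform position. Then for each $m \geq 2$, $$h^0(\mathbb{P}^c, \mathcal{I}_\Gamma(m)) = \binom{c+m}{m} - d \ \text{ if } d \leq 2c+1, \qquad h^0(\mathbb{P}^c, \mathcal{I}_\Gamma(m)) \leq \binom{c+m}{m} - 2c - 1 \ \text{ if } d \geq 2c+2.$$ In particular, $h^0(\mathbb{P}^c, \mathcal{I}_\Gamma(2)) = \binom{c+1}{2} + c + 1 - d$ if $d \leq 2c+1$, and $h^0(\mathbb{P}^c, \mathcal{I}_\Gamma(2)) \leq \binom{c}{2}$ if $d \geq 2c+2$.
   Context: The ground field is algebraically closed of arbitrary characteristic. A finite set $\Gamma \subset \mathbb{P}^c$ is in linear semi-uniform position if it spans $\mathbb{P}^c$ and there are integers $\nu(i,\Gamma)$, $0 \leq i \leq c$, such that every $i$-dimensional linear subspace of $\mathbb{P}^c$ spanned by $i+1$ linearly independent points of $\Gamma$ contains exactly $\nu(i,\Gamma)$ points of $\Gamma$. $\mathcal{I}_\Gamma$ denotes the ideal sheaf of $\Gamma$. *)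

(* Defs.v *)
From HB Require Import structures.
From mathcomp Require Import all_boot all_order all_algebra.
Set Implicit Arguments. Unset Strict Implicit. Unset Printing Implicit Defensive.
Import Order.TTheory GRing.Theory Num.Theory.
Local Open Scope ring_scope.

(* A configuration of d points of P^c over K is given by a matrix
   G : 'M[K]_(d, c.+1) whose j-th row is a chosen vector of homogeneous
   coordinates of the j-th point. *)

Definition distinct_points (K : fieldType) (d c : nat) (G : 'M[K]_(d, c.+1)) :=
  (forall j : 'I_d, row j G != 0) /\
  (forall j k : 'I_d, j != k -> \rank (col_mx (row j G) (row k G)) = 2%N).

(* matrix whose row space is the span of the points indexed by S *)
Definition sub_pts (K : fieldType) (d c : nat) (G : 'M[K]_(d, c.+1))
  (S : {set 'I_d}) : 'M[K]_(d, c.+1) :=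
  \matrix_(k < d, i < c.+1) (if k \in S then G k i else 0).

Definition spans_Pc (K : fieldType) (d c : nat) (G : 'M[K]_(d, c.+1)) :=
  \rank G = c.+1.

Definition lin_semi_uniform (K : fieldType) (d c : nat) (G : 'M[K]_(d, c.+1)) :=
  spans_Pc G /\
  exists nu : nat -> nat, forall (i : nat), (i <= c)%N ->
    forall S : {set 'I_d}, #|S| = i.+1 -> \rank (sub_pts G S) = i.+1 ->
      #|[set j : 'I_d | (row j G <= sub_pts G S)%MS]| = nu i.

Definition monom (c m : nat) :=
  {t : {ffun 'I_(c.+1) -> 'I_(m.+1)} | (\sum_i (t i : nat) == m)%N}.

(* evaluation of the monomial basis of H^0(O_{P^c}(m)) at the points:
   a form of degree m with coefficient row vector u vanishes on Gamma
   iff u *m evalmx G m = 0 *)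
Definition evalmx (K : fieldType) (d c : nat) (G : 'M[K]_(d, c.+1)) (m : nat)
  : 'M[K]_(#|{: monom c m}|, d) :=
  \matrix_(a < #|{: monom c m}|, j < d)
    \prod_(i < c.+1) (G j i) ^+ (val (@enum_val _ (mem {: monom c m}) a) i : nat).

Definition h0_IGamma (K : fieldType) (d c : nat) (G : 'M[K]_(d, c.+1)) (m : nat)
  : nat := \rank (kermx (evalmx G m)).

(* Main.v *)
Require Import Defs.
From HB Require Import structures.
From mathcomp Require Import all_boot all_order all_algebra.
From mathcomp Require Import ring zify.
Import Order.TTheory GRing.Theory Num.Theory.
Set Implicit Arguments. Unset Strict Implicit. Unset Printing Implicit Defensive.

Lemma numeric (n K0 : nat) (dl : nat -> nat) :
  (1 <= n)%N -> dl 1%N = 1%N ->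
  (forall k, (1 <= k)%N -> (k < n)%N -> (dl k <= dl k.+1)%N) ->
  (forall k, (1 <= k)%N -> (k <= n)%N -> (forall j, (1 <= j)%N -> (j < k)%N -> dl j = 1%N) -> (k <= K0)%N) ->
  (2 <= K0)%N ->
  (minn (\sum_(1 <= k < n.+1) dl k) (2 * n - 1) <= \sum_(1 <= k < n.+1) minn (dl k) K0)%N.
Proof.
move=> n1 d1 mono hK K2.
pose S k := (\sum_(1 <= i < k.+1) minn (dl i) K0)%N.
pose D k := (\sum_(1 <= i < k.+1) dl i)%N.
have SS k : S k.+1 = (S k + minn (dl k.+1) K0)%N by rewrite /S big_nat_recr.
have DS k : D k.+1 = (D k + dl k.+1)%N by rewrite /D big_nat_recr.
have S1 : S 1%N = 1%N by rewrite /S big_nat1 d1; lia.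
have D1 : D 1%N = 1%N by rewrite /D big_nat1 d1.
suff inv : forall k, (1 <= k)%N -> (k <= n)%N ->
   [\/ (S k = k /\ D k = k /\ forall j, (1 <= j)%N -> (j <= k)%N -> dl j = 1%N),
       (S k = D k /\ 2 <= dl k /\ 2 * k + 1 <= D k + K0)%N
     | (2 * k - 1 <= S k /\ 2 <= dl k)%N].
  have := inv n n1 (leqnn n); rewrite -/(S n) -/(D n).
  by case=> [[-> [-> _]]|[-> _]|[H _]]; lia.
elim=> [//|k IH] _ kn.
have [k0|k1] := posnP k.
  subst k; constructor 1; split; first exact: S1. split; first exact: D1.
  by move=> j j1 j2; have -> : j = 1%N by lia.
have := IH k1 (ltnW kn); rewrite SS DS.
case=> [[Sk [Dk H1]]|[Sk [dk Dk]]|[Sk dk]].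
- have Kk : (k.+1 <= K0)%N.
    apply: hK => // j j1 j2; apply: H1; lia.
  have [e|ne] := eqVneq (dl k.+1) 1%N.
    constructor 1; rewrite Sk Dk e; split; first lia; split; first lia.
    move=> j j1 j2; have [->|jk] := eqVneq j k.+1; first exact: e.
    apply: H1; lia.
  have d2 : (2 <= dl k.+1)%N by have := mono k k1 kn; rewrite (H1 k) //; lia.
  have [le|lt] := leqP (dl k.+1) K0.
    by constructor 2; lia.
  by constructor 3; lia.
- have d2 : (2 <= dl k.+1)%N by have := mono k k1 kn; lia.
  have [le|lt] := leqP (dl k.+1) K0.
    by constructor 2; lia.
  by constructor 3; lia.
- have d2 : (2 <= dl k.+1)%N by have := mono k k1 kn; lia.
  by constructor 3; lia.
Qed.

Local Open Scope ring_scope.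

Lemma card_monom c m : #|{: monom c m}| = 'C(c + m, m).
Proof.
have -> : 'C(c + m, m) = 'C(c + m, c).
  by rewrite -[in RHS]bin_sub ?leq_addr // addKn.
rewrite -card_ord_partitions /monom card_sig.
pose g (f : {ffun 'I_c.+1 -> 'I_m.+1}) := [tuple f i | i < c.+1].
have ginj : injective g.
  move=> f1 f2 /(congr1 (fun t => tnth t)) H; apply/ffunP => i.
  by have := congr1 (fun h => h i) H; rewrite !tnth_mktuple.
have Hs f : (\sum_(i <- g f) (i : nat) = \sum_i (f i : nat))%N.
  by rewrite /g /= big_map enumT.
rewrite -(card_image ginj).
apply: eq_card => t; rewrite inE.
apply/imageP/idP.
- case=> f; rewrite inE => Hf ->.
  by rewrite Hs.
- move=> Ht; exists [ffun i => tnth t i].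
    move/eqP: Ht; rewrite big_tuple => Ht.
    rewrite inE; apply/eqP; rewrite -[X in _ = X]Ht.
    by apply: eq_bigr => i _; rewrite ffunE.
  by apply: eq_from_tnth => i; rewrite tnth_mktuple ffunE.
Qed.

Section Alg.
Variables (K : fieldType) (c : nat).

Definition mval m (f : monom c m -> K) (x : 'I_c.+1 -> K) :=
  \sum_t f t * \prod_i x i ^+ (val t i : nat).

Definition incf m (t : monom c m) (i : 'I_c.+1) : {ffun 'I_c.+1 -> 'I_m.+2} :=
  [ffun k => inord ((val t k : nat) + (k == i))].

Lemma incfE m (t : monom c m) i k : (incf t i k : nat) = ((val t k : nat) + (k == i))%N.
Proof.
rewrite ffunE inordK // ltnS.
have := ltn_ord (val t k); rewrite ltnS => H.
move: (val t k : nat) H (k == i) => a Ha [] /=; rewrite ?addn1 ?addn0 //; exact: leqW.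
Qed.

Lemma incf_sum m (t : monom c m) i : (\sum_k (incf t i k : nat) == m.+1)%N.
Proof.
rewrite (eq_bigr (fun k => (val t k : nat) + (k == i))%N); last by move=> k _; rewrite incfE.
rewrite big_split /= (eqP (valP t)) (bigD1 i) //= eqxx big1 ?addn0 ?addn1 //.
by move=> k /negbTE ->.
Qed.

Definition inc m (t : monom c m) i : monom c m.+1 := exist _ (incf t i) (incf_sum t i).

Lemma mval_mul m (f : monom c m -> K) (w : 'I_c.+1 -> K) :
  exists g : monom c m.+1 -> K, forall x,
    mval g x = mval f x * \sum_i x i * w i.
Proof.
exists (fun s => \sum_(p : monom c m * 'I_c.+1 | inc p.1 p.2 == s) f p.1 * w p.2).
move=> x; rewrite /mval.
under eq_bigr => s _ do rewrite big_distrl /=.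
rewrite (exchange_big_dep xpredT) //=.
rewrite (eq_bigr (fun p => f p.1 * w p.2 * \prod_i x i ^+ (val (inc p.1 p.2) i : nat))); last first.
  by move=> p _; rewrite (big_pred1 (inc p.1 p.2)) // => s; rewrite /= eq_sym.
rewrite big_distrl /=.
under [in RHS]eq_bigr => t _ do rewrite big_distrr /=.
rewrite pair_bigA /=.
apply: eq_bigr => -[t i] _ /=.
have -> : \prod_k x k ^+ (val (inc t i) k : nat) = (\prod_k x k ^+ (val t k : nat)) * x i.
  rewrite (eq_bigr (fun k => x k ^+ (val t k : nat) * x k ^+ (k == i))); last first.
    by move=> k _; rewrite /= incfE exprD.
  rewrite big_split /=; congr (_ * _).
  rewrite (bigD1 i) //= eqxx expr1 big1 ?mulr1 // => k /negbTE ->.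
  by rewrite expr0.
by rewrite /=; ring.
Qed.

Lemma t0_sum : (\sum_i ([ffun _ => ord0] : {ffun 'I_c.+1 -> 'I_1}) i == 0)%N.
Proof. by rewrite big1 // => i _; rewrite ffunE. Qed.
Definition t0 : monom c 0 := exist (fun t : {ffun 'I_c.+1 -> 'I_1} => (\sum_i (t i : nat) == 0)%N) [ffun _ => ord0] t0_sum.

Lemma mval_one : exists f : monom c 0 -> K, forall x, mval f x = 1.
Proof.
exists (fun s => (s == t0)%:R) => x; rewrite /mval (bigD1 t0) //= eqxx mul1r.
rewrite [X in _ + X]big1 ?addr0; last by move=> s Hs; rewrite (negbTE Hs) mul0r.
by rewrite big1 // => i _; rewrite ffunE expr0.
Qed.

Lemma mval_prod m (ws : 'I_m -> 'I_c.+1 -> K) :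
  exists f : monom c m -> K, forall x, mval f x = \prod_k \sum_i x i * ws k i.
Proof.
elim: m ws => [|m IH] ws.
  by have [f Hf] := mval_one; exists f => x; rewrite Hf big_ord0.
have [f Hf] := IH (fun k => ws (widen_ord (leqnSn m) k)).
have [g Hg] := mval_mul f (ws ord_max).
exists g => x; rewrite Hg Hf [in RHS]big_ord_recr /=.
done.
Qed.

Lemma evalmxE d (G : 'M[K]_(d, c.+1)) m (f : monom c m -> K) j :
  ((\row_a f (enum_val a)) *m evalmx G m) 0 j = mval f (fun i => G j i).
Proof.
rewrite mxE /mval.
transitivity (\sum_(t in {: monom c m}) f t * \prod_i G j i ^+ (val t i : nat)).
  rewrite [RHS]big_enum_val /=; apply: eq_bigr => a _; rewrite !mxE.
  done.
by [].
Qed.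
End Alg.

Section Mat.
Variables (K : fieldType) (d c : nat) (G : 'M[K]_(d, c.+1)).
Implicit Types (S T B : {set 'I_d}) (j k : 'I_d).

Definition cl (S : {set 'I_d}) := [set j | (row j G <= sub_pts G S)%MS].
Definition rk (S : {set 'I_d}) := \rank (sub_pts G S).

Lemma row_sp S k : row k (sub_pts G S) = if k \in S then row k G else 0.
Proof. by apply/rowP => i; rewrite !mxE; case: (k \in S); rewrite ?mxE. Qed.

Lemma mem_sp S k : k \in S -> (row k G <= sub_pts G S)%MS.
Proof. by move=> kS; have := row_sub k (sub_pts G S); rewrite row_sp kS. Qed.

Lemma sp_sub n (S : {set 'I_d}) (X : 'M_(n, c.+1)) :
  (forall k, k \in S -> (row k G <= X)%MS) -> (sub_pts G S <= X)%MS.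
Proof.
move=> H; apply/row_subP => k; rewrite row_sp.
by case: ifP => [/H //|_]; exact: sub0mx.
Qed.

Lemma sp_mono S T : S \subset T -> (sub_pts G S <= sub_pts G T)%MS.
Proof. by move=> /subsetP ST; apply: sp_sub => k /ST; apply: mem_sp. Qed.

Lemma sp_cl S T : S \subset cl T -> (sub_pts G S <= sub_pts G T)%MS.
Proof. by move=> /subsetP ST; apply: sp_sub => k /ST; rewrite inE. Qed.

Lemma sub_cl S : S \subset cl S.
Proof. by apply/subsetP => k kS; rewrite inE mem_sp. Qed.

Lemma cl_mono S T : (sub_pts G S <= sub_pts G T)%MS -> cl S \subset cl T.
Proof. by move=> H; apply/subsetP => k; rewrite !inE => /submx_trans; apply. Qed.

Lemma cl_cl S : cl (cl S) = cl S.
Proof.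
apply/eqP; rewrite eqEsubset; apply/andP; split.
  by apply: cl_mono; apply: sp_cl.
by apply: cl_mono; apply: sp_mono; apply: sub_cl.
Qed.

Lemma rk_mono S T : (sub_pts G S <= sub_pts G T)%MS -> (rk S <= rk T)%N.
Proof. exact: mxrankS. Qed.

Lemma sp_U1 S j : (sub_pts G (j |: S) :=: sub_pts G S + row j G)%MS.
Proof.
apply/eqmxP/andP; split.
  apply: sp_sub => k; rewrite !inE => /orP[/eqP -> | kS].
    exact: addsmxSr.
  exact: submx_trans (mem_sp kS) (addsmxSl _ _).
rewrite addsmx_sub; apply/andP; split.
  by apply: sp_mono; apply: subsetUr.
by apply: mem_sp; apply: setU11.
Qed.

Lemma rk_U1_in S j : j \in cl S -> rk (j |: S) = rk S.
Proof.
rewrite inE => H; rewrite /rk sp_U1.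
by rewrite (addsmx_idPl H).
Qed.

Lemma rk_U1_out S j : j \notin cl S -> rk (j |: S) = (rk S).+1.
Proof.
rewrite inE => H; rewrite /rk sp_U1.
set M := sub_pts G S; set v := row j G.
have rv : \rank v = 1%N.
  rewrite rank_rV; case: eqP => // v0; move: H; rewrite -/v v0 sub0mx //.
have rc : \rank (M :&: v)%MS = 0%N.
  have := mxrankS (capmxSr M v); rewrite rv.
  case E: (\rank (M :&: v)%MS) => [|[|n]] // _.
  have Hv : (v <= M :&: v)%MS.
    by rewrite -(mxrank_leqif_sup (capmxSr M v)) E rv.
  by move: H; rewrite (submx_trans Hv (capmxSl _ _)).
have := mxrank_sum_cap M v; rewrite rc rv addn0 addn1; done.
Qed.

Lemma rk_U1_le S j : (rk (j |: S) <= (rk S).+1)%N.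
Proof.
by case: (boolP (j \in cl S)) => H; [rewrite rk_U1_in | rewrite rk_U1_out].
Qed.

Lemma rk_union_le S (s : seq 'I_d) : (rk (S :|: [set:: s]) <= rk S + size s)%N.
Proof.
elim: s => [|a s IH] /=.
  by rewrite addn0; apply: rk_mono; apply: sp_mono; apply/subsetP => x; rewrite !inE orbF.
rewrite set_cons setUCA addnS; apply: leq_trans (rk_U1_le _ _) _; by rewrite ltnS.
Qed.

Lemma rk_card S : (rk S <= #|S|)%N.
Proof.
have := rk_union_le set0 (enum S).
rewrite set0U -cardE set_enum /rk.
have -> : sub_pts G set0 = 0 by apply/matrixP => i k; rewrite !mxE inE.
by rewrite mxrank0.
Qed.

Lemma indep_sub S T : T \subset S -> rk S = #|S| -> rk T = #|T|.
Proof.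
move=> TS rS; apply/eqP; rewrite eqn_leq rk_card /=.
have := rk_union_le T (enum (S :\: T)).
rewrite -cardE set_enum.
have -> : T :|: S :\: T = S.
  by apply/setP => x; rewrite !inE; case xT: (x \in T) => //=; rewrite (subsetP TS).
rewrite rS -(cardsID T S) (setIidPr TS) leq_add2r //.
Qed.

Lemma indep_out S j : j \notin S -> rk (j |: S) = #|j |: S| -> j \notin cl S.
Proof.
move=> jS H; apply/negP => jcl; move: H; rewrite rk_U1_in // cardsU1 jS.
by move=> H; have := rk_card S; rewrite H ltnn.
Qed.

Lemma basis_seq (s : seq 'I_d) : exists B,
  [/\ B \subset [set:: s], rk B = #|B| & (sub_pts G [set:: s] <= sub_pts G B)%MS].
Proof.
elim: s => [|a s [B [BS rB SB]]].
  exists set0; split; first exact: sub0set.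
    rewrite cards0 /rk; have -> : sub_pts G set0 = 0 by apply/matrixP => i k; rewrite !mxE inE.
    by rewrite mxrank0.
  by apply: sp_mono; apply/subsetP => x; rewrite inE.
rewrite set_cons.
case: (boolP (a \in cl B)) => aB.
  exists B; split => //; first by apply: subset_trans BS (subsetUr _ _).
  apply: sp_sub => k; rewrite in_setU1 => /orP[/eqP -> | kS]; first by rewrite inE in aB.
  exact: submx_trans (mem_sp kS) SB.
exists (a |: B); split.
- by apply: setUS.
- rewrite rk_U1_out // rB cardsU1.
  have aB' : a \notin B := contra (@subsetP _ _ _ (sub_cl B) a) aB.
  by rewrite aB'.
- apply: sp_sub => k; rewrite in_setU1 => /orP[/eqP -> | kS]; first by apply: mem_sp; apply: setU11.
  apply: submx_trans (submx_trans (mem_sp kS) SB) _.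
  by apply: sp_mono; apply: subsetUr.
Qed.

Lemma basis_set S : exists B,
  [/\ B \subset S, rk B = #|B|, rk B = rk S & cl B = cl S].
Proof.
have [B [BS rB SB]] := basis_seq (enum S).
rewrite set_enum in BS SB.
have BS' := sp_mono BS.
exists B; split => //.
  by apply/eqP; rewrite eqn_leq !mxrankS.
by apply/eqP; rewrite eqEsubset !cl_mono.
Qed.

End Mat.

Section Sel.
Variable K : fieldType.

Definition colsel d (S : {set 'I_d}) : 'M[K]_d := diag_mx (\row_j (j \in S)%:R).

Lemma colselE N d (E : 'M[K]_(N, d)) S :
  E *m colsel S = \matrix_(i, j) (E i j * (j \in S)%:R).
Proof. by rewrite mul_mx_diag; apply/matrixP => i j; rewrite !mxE. Qed.

Lemma rank_step N d (E : 'M[K]_(N, d)) (S : {set 'I_d}) x (u : 'rV_N) :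
  x \notin S -> (u *m E) 0 x != 0 -> (forall y, y \in S -> (u *m E) 0 y = 0) ->
  ((\rank (E *m colsel S)).+1 <= \rank (E *m colsel (x |: S)))%N.
Proof.
move=> xS ux uS.
set W := E *m colsel (x |: S).
have EW : E *m colsel S = W *m colsel S.
  rewrite /W !colselE; apply/matrixP => i j; rewrite !mxE.
  case: (boolP (j \in S)) => jS; last by rewrite !mulr0.
  by rewrite in_setU1 ?jS orbT !mulr1.
set v := u *m W.
have vW : (v <= W)%MS by apply: submxMl.
have vE j : v 0 j = (u *m E) 0 j * (j \in x |: S)%:R.
  by rewrite /v /W mulmxA colselE mxE.
have vk : (v <= kermx (colsel S))%MS.
  apply/sub_kermxP; rewrite colselE; apply/rowP => j; rewrite [in RHS]mxE mxE vE.
  case: (boolP (j \in S)) => jS; last by rewrite mulr0.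
  by rewrite uS // mul0r mul0r.
have v0 : v != 0.
  apply/eqP => /rowP /(_ x); rewrite vE [in RHS]mxE setU11 mulr1 => H.
  by move: ux; rewrite H eqxx.
have r1 : (1 <= \rank (W :&: kermx (colsel S))%MS)%N.
  have := mxrankS (_ : (v <= W :&: kermx (colsel S))%MS).
  rewrite rank_rV v0; apply; by rewrite sub_capmx vW vk.
have := mxrank_mul_ker W (colsel S); rewrite -EW => <-.
by rewrite -addn1 leq_add2l.
Qed.

Lemma linform d c (G : 'M[K]_(d, c.+1)) A x : x \notin cl G A ->
  exists w : 'I_c.+1 -> K, (\sum_i G x i * w i != 0) /\
    forall y, y \in A -> \sum_i G y i * w i = 0.
Proof.
rewrite inE submxE => Hx.
set M := cokermx (sub_pts G A).
have [l Hl] : exists l, (row x G *m M) 0 l != 0.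
  case: (pickP (fun l => (row x G *m M) 0 l != 0)) => [l Hl|H]; first by exists l.
  move: Hx; case/negP; apply/eqP/rowP => l; rewrite [in RHS]mxE.
  by have := H l => /= /negbFE /eqP.
exists (fun i => M i l); split.
  by move: Hl; rewrite mxE; under eq_bigr do rewrite mxE.
move=> y yA; have := mem_sp G yA; rewrite submxE -/M => /eqP /rowP /(_ l).
by rewrite !mxE; under eq_bigr do rewrite mxE.
Qed.

Lemma sep d c (G : 'M[K]_(d, c.+1)) m A B x : (2 <= m)%N ->
  x \notin cl G A -> x \notin cl G B ->
  exists u : 'rV_#|{: monom c m}|, (u *m evalmx G m) 0 x != 0 /\
    forall y, y \in A :|: B -> (u *m evalmx G m) 0 y = 0.
Proof.
move=> m2 xA xB.
have [wA [wAx wAy]] := linform xA.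
have [wB [wBx wBy]] := linform xB.
pose ws (k : 'I_m) := if (k : nat) == 0%N then wB else wA.
have [f Hf] := mval_prod (ws).
exists (\row_a f (enum_val a)).
have E y : ((\row_a f (enum_val a)) *m evalmx G m) 0 y = \prod_k \sum_i G y i * ws k i.
  by rewrite evalmxE Hf.
split.
  rewrite E; apply/prodf_neq0 => k _; rewrite /ws; case: ifP => _ //.
move=> y; rewrite in_setU => /orP[yA|yB]; rewrite E.
  have k1 : (1 < m)%N by [].
  rewrite (bigD1 (Ordinal k1)) //= /ws /= wAy // mul0r //.
have k0 : (0 < m)%N by apply: leq_trans m2.
by rewrite (bigD1 (Ordinal k0)) //= /ws /= wBy // mul0r.
Qed.

End Sel.

Section Chain.
Variables (K : fieldType) (d c : nat) (G : 'M[K]_(d, c.+1)).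
Variables (nu : nat -> nat).
Hypothesis Hnu : forall i, (i <= c)%N -> forall S : {set 'I_d}, #|S| = i.+1 ->
   \rank (sub_pts G S) = i.+1 -> #|[set j : 'I_d | (row j G <= sub_pts G S)%MS]| = nu i.
Hypothesis Hsp : \rank G = c.+1.
Hypothesis Hrow : forall j : 'I_d, row j G != 0.
Hypothesis Hd2 : forall j k : 'I_d, j != k -> \rank (col_mx (row j G) (row k G)) = 2%N.
Hypothesis hc : (1 <= c)%N.

Local Notation cl := (cl G).
Local Notation rk := (rk G).
Implicit Types (S T : {set 'I_d}).

Lemma sp0 : sub_pts G set0 = 0.
Proof. by apply/matrixP => i k; rewrite !mxE inE. Qed.

Lemma cl0 : cl set0 = set0.
Proof.
apply/setP => j; rewrite !inE sp0; apply/negP => /submx0null H.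
by move: (Hrow j); rewrite H eqxx.
Qed.

Lemma rk0 : rk set0 = 0%N.
Proof. by rewrite /rk sp0 mxrank0. Qed.

Lemma cl1 b : cl [set b] = [set b].
Proof.
apply/setP => j; rewrite inE [RHS]inE.
apply/idP/idP => [H|/eqP ->]; last by apply: mem_sp; rewrite inE.
apply/negPn/negP => jb.
have := Hd2 jb; rewrite -addsmxE => r2.
have := rk_card G [set b]; rewrite cards1 /rk => r1.
have : (row j G + row b G <= sub_pts G [set b])%MS.
  by rewrite addsmx_sub H mem_sp // inE.
by move/mxrankS; rewrite r2 => /leq_trans/(_ r1).
Qed.

Lemma rk_le_sub S T : (sub_pts G S <= sub_pts G T)%MS -> rk S = rk T ->
  (sub_pts G T <= sub_pts G S)%MS.
Proof. by move=> H E; move: (mxrank_leqif_sup H) => [_ <-]; rewrite /rk in E; rewrite E. Qed.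

Lemma rk_le_c S : (rk S <= c.+1)%N.
Proof. exact: rank_leq_col. Qed.

Lemma cl_card_indep S : rk S = #|S| -> (1 <= #|S|)%N -> #|cl S| = nu (#|S|).-1.
Proof.
move=> rS S1; have := rk_le_c S; rewrite rS => Sc.
have := Hnu (i := (#|S|).-1) _ (S := S); rewrite prednK //; apply => //.
by rewrite -ltnS prednK.
Qed.


Section Basis.
Variables (bs : seq 'I_d).
Hypotheses (Hbu : uniq bs) (Hbsz : size bs = c.+1) (Hbr : rk [set:: bs] = c.+1).

Definition Q k := [set:: take k bs].

Lemma card_seq (s : seq 'I_d) : uniq s -> #|[set:: s]| = size s.
Proof. by move=> u; rewrite cardsE; apply/card_uniqP. Qed.

Lemma card_Q k : (k <= c.+1)%N -> #|Q k| = k.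
Proof. by move=> kc; rewrite card_seq ?take_uniq // size_takel // Hbsz. Qed.

Lemma Q_sub k : Q k \subset [set:: bs].
Proof. by apply/subsetP => x; rewrite !inE; apply: mem_take. Qed.

Lemma rk_Q k : (k <= c.+1)%N -> rk (Q k) = k.
Proof.
move=> kc; rewrite -[in RHS](card_Q kc); apply: indep_sub (Q_sub k) _.
by rewrite Hbr card_seq // Hbsz.
Qed.

Lemma indep_Q k : (k <= c.+1)%N -> rk (Q k) = #|Q k|.
Proof. by move=> kc; rewrite rk_Q // card_Q. Qed.

Lemma Q0 : Q 0 = set0.
Proof. by apply/setP => x; rewrite !inE take0. Qed.

Lemma QT : Q c.+1 = [set:: bs].
Proof. by rewrite /Q -Hbsz take_size. Qed.

Lemma Q_S k : (k <= c)%N -> exists x, Q k.+1 = x |: Q k /\ x \notin Q k.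
Proof.
move=> kc; case E: bs Hbsz => [|x0 s] // _.
have ks : (k < size bs)%N by rewrite Hbsz.
exists (nth x0 bs k); split.
  by apply/setP => z; rewrite /Q (take_nth x0 ks) !inE mem_rcons in_cons.
have := take_uniq k.+1 Hbu; rewrite (take_nth x0 ks) rcons_uniq => /andP[H _].
by rewrite inE.
Qed.

Lemma Q_mono k l : (k <= l)%N -> Q k \subset Q l.
Proof.
move=> kl; apply/subsetP => x; rewrite !inE -(take_takel _ kl); apply: mem_take.
Qed.

Definition N k := #|cl (Q k)|.

Lemma N0 : N 0 = 0%N.
Proof. by rewrite /N Q0 cl0 cards0. Qed.

Lemma N1 : N 1 = 1%N.
Proof.
rewrite /N; have [x [-> _]] := Q_S (leq0n c).
by rewrite Q0 setU0 cl1 cards1.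
Qed.

Lemma cl_Q_mono k l : (k <= l)%N -> cl (Q k) \subset cl (Q l).
Proof. by move=> kl; apply: cl_mono; apply: sp_mono; apply: Q_mono. Qed.

Lemma N_mono k l : (k <= l)%N -> (N k <= N l)%N.
Proof. by move=> kl; apply: subset_leq_card; apply: cl_Q_mono. Qed.

Lemma N_indep S : rk S = #|S| -> #|cl S| = N #|S|.
Proof.
move=> rS; have Sc : (#|S| <= c.+1)%N by rewrite -rS rk_le_c.
have [S0|S1] := posnP #|S|.
  by move/cards0_eq: S0 => ->; rewrite cl0 cards0 N0.
rewrite cl_card_indep // /N cl_card_indep ?card_Q ?indep_Q //.
by rewrite card_Q.
Qed.

Lemma NT : N c.+1 = d.
Proof.
rewrite /N QT; suff -> : cl [set:: bs] = [set: 'I_d] by rewrite cardsT card_ord.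
apply/setP => j; rewrite !inE.
have H : (sub_pts G [set:: bs] <= G)%MS.
  apply: sp_sub => k _; exact: row_sub.
have : (G <= sub_pts G [set:: bs])%MS.
  by move: (mxrank_leqif_sup H) => [_ <-]; rewrite Hsp; apply/eqP.
by apply: submx_trans; apply: row_sub.
Qed.


Lemma cardD_sub (A B : {set 'I_d}) : B \subset A -> #|A :\: B| = (#|A| - #|B|)%N.
Proof. by move=> BA; rewrite cardsD (setIidPr BA). Qed.

Lemma dl_mono k : (1 <= k)%N -> (k <= c)%N -> (N k - N k.-1 <= N k.+1 - N k)%N.
Proof.
case: k => [//|k] _ kc.
have [x [Ex xn]] := Q_S kc.
have Qk2 : (k.+2 <= c.+1)%N by [].
have xQ2 : x |: Q k \subset Q k.+2.
  rewrite Ex; apply: setUS; apply: Q_mono; exact: leqnSn.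
have indx : rk (x |: Q k) = #|x |: Q k|.
  by apply: indep_sub xQ2 _; apply: indep_Q.
have xk : x \notin Q k.
  by apply/negP => xk; move: xn; rewrite (subsetP (Q_mono (leqnSn k)) x xk).
have cx : #|x |: Q k| = k.+1 by rewrite cardsU1 xk card_Q // ltnW // ltnW.
set Gs := cl (x |: Q k).
have cG : #|Gs| = N k.+1.
  by rewrite /Gs (N_indep indx) cx.
have sG : cl (Q k) \subset Gs by apply: cl_mono; apply: sp_mono; apply: subsetUr.
have xcl : x \notin cl (Q k.+1).
  have h := indep_Q Qk2; rewrite Ex in h; exact: (indep_out xn h).
have sub : Gs :\: cl (Q k) \subset cl (Q k.+2) :\: cl (Q k.+1).
  apply/subsetP => z; rewrite !in_setD => /andP[zn zG]; apply/andP; split; last first.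
    exact: (subsetP (cl_mono (sp_mono G xQ2)) z zG).
  apply/negP => zQ.
  have rT : rk (z |: Q k) = k.+1.
    by rewrite rk_U1_out // rk_Q // ltnW // ltnW.
  have T1 : z |: Q k \subset cl (Q k.+1).
    apply/subsetP => y; rewrite in_setU1 => /orP[/eqP -> //|yQ].
    by apply: (subsetP (sub_cl _ _)); apply: (subsetP (Q_mono (leqnSn k))).
  have T2 : z |: Q k \subset Gs.
    apply/subsetP => y; rewrite in_setU1 => /orP[/eqP -> //|yQ].
    by apply: (subsetP (sub_cl _ _)); rewrite in_setU1 yQ orbT.
  have H1 := rk_le_sub (sp_cl T1) (etrans rT (esym (rk_Q (ltnW Qk2)))).
  have H2 := rk_le_sub (sp_cl T2) (etrans rT (esym (etrans indx cx))).
  move: xcl; rewrite inE; case/negP.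
  apply: (submx_trans _ (submx_trans H2 (sp_cl T1))).
  by apply: mem_sp; apply: setU11.
have := subset_leq_card sub.
rewrite !cardD_sub //; last by apply: cl_Q_mono.
by rewrite cG /=.
Qed.


Definition dl k := (N k - N k.-1)%N.

Lemma N_sum k : (k <= c.+1)%N -> N k = (\sum_(1 <= j < k.+1) dl j)%N.
Proof.
elim: k => [_|k IH kc]; first by rewrite N0 big_geq.
rewrite big_nat_recr // -IH; last exact: ltnW.
rewrite /dl; exact: esym (subnKC (N_mono (leqnSn k))).
Qed.

Lemma dl1 : dl 1 = 1%N.
Proof. by rewrite /dl N1 N0. Qed.

Lemma small_indep K0 : (forall j, (1 <= j)%N -> (j < K0)%N -> dl j = 1%N) ->
  forall X : {set 'I_d}, (#|X| <= K0)%N -> rk X = #|X|.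
Proof.
move=> H X XK; apply/eqP; rewrite eqn_leq rk_card /= leqNgt; apply/negP => lt.
have [Bx [BX rB rBX clB]] := basis_set G X.
have Nr : #|cl X| = N (rk X) by rewrite -clB N_indep // -rB rBX.
have Nrr : N (rk X) = rk X.
  rewrite N_sum ?rk_le_c //.
  rewrite (eq_big_nat _ _ (F2 := fun _ => 1%N)); last first.
    move=> j /andP[j1 j2]; apply: H => //.
    by apply: leq_ltn_trans _ (leq_trans lt XK); rewrite -ltnS.
  by rewrite sum_nat_const_nat muln1 subn1.
have := subset_leq_card (sub_cl G X); rewrite Nr Nrr => /(leq_trans lt).
by rewrite ltnn.
Qed.

Fixpoint Uc (Tf : nat -> {set 'I_d}) (k : nat) : {set 'I_d} :=
  if k is k'.+1 then Uc Tf k' :|: Tf k'.+1 else set0.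

Section Rank.
Variables (Nn : nat) (E : 'M[K]_(Nn, d)).
Hypothesis Hsep : forall (A B : {set 'I_d}) x, x \notin cl A -> x \notin cl B ->
  exists u : 'rV_Nn, (u *m E) 0 x != 0 /\ forall y, y \in A :|: B -> (u *m E) 0 y = 0.

Lemma layer n : forall A T : {set 'I_d}, #|T| = n -> rk T = #|T| ->
  (forall x, x \in T -> x \notin cl A) ->
  (\rank (E *m colsel K A) + #|T| <= \rank (E *m colsel K (A :|: T)))%N.
Proof.
elim: n => [|n IH] A T cT rT HT.
  by move/cards0_eq: cT => ->; rewrite setU0 cards0 addn0.
have [x xT] : exists x, x \in T.
  by apply/set0Pn; apply/eqP => T0; move: cT; rewrite T0 cards0.
set T' := T :\ x.
have cT' : #|T'| = n by move: cT; rewrite (cardsD1 x T) xT add1n => -[].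
have rT' : rk T' = #|T'| by apply: indep_sub rT; apply: subD1set.
have HT' : forall y, y \in T' -> y \notin cl A.
  by move=> y; rewrite in_setD1 => /andP[_]; apply: HT.
have IH' := IH A T' cT' rT' HT'.
have xA : x \notin cl A by apply: HT.
have xT' : x \notin T' by rewrite in_setD1 eqxx.
have TT : x |: T' = T by rewrite setD1K.
have xclT : x \notin cl T'.
  by apply: indep_out xT' _; rewrite TT.
have [u [ux uy]] := Hsep xA xclT.
have xS : x \notin A :|: T'.
  rewrite in_setU negb_or xT' andbT.
  by apply: contra xA; apply: (subsetP (sub_cl G A)).
have := rank_step xS ux uy.
rewrite setUCA TT => H.
by rewrite cT -cT' addnS; apply: leq_trans H; rewrite ltnS.
Qed.

Lemma chain (Tf : nat -> {set 'I_d}) :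
  (forall k, (1 <= k)%N -> (k <= c.+1)%N ->
     Tf k \subset cl (Q k) :\: cl (Q k.-1) /\ rk (Tf k) = #|Tf k|) ->
  forall k, (k <= c.+1)%N -> Uc Tf k \subset cl (Q k) /\
     (\sum_(1 <= j < k.+1) #|Tf j| <= \rank (E *m colsel K (Uc Tf k)))%N.
Proof.
move=> HT; elim => [_|k IH kc].
  by rewrite big_geq //; split => //; apply: sub0set.
have [HU Hs] := IH (ltnW kc).
have [TL rT] := HT k.+1 isT kc.
have Hx : forall x, x \in Tf k.+1 -> x \notin cl (Uc Tf k).
  move=> x /(subsetP TL); rewrite in_setD /= => /andP[xn _].
  have sU : cl (Uc Tf k) \subset cl (Q k).
    exact: cl_mono (sp_cl HU).
  by apply/negP => xU; move: xn; rewrite (subsetP sU x xU).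
split.
  rewrite /= subUset; apply/andP; split.
    exact: subset_trans HU (cl_Q_mono (leqnSn k)).
  by apply: subset_trans TL _; apply: subsetDl.
rewrite big_nat_recr //=.
exact: leq_trans (leq_add Hs (leqnn _)) (layer (erefl _) rT Hx).
Qed.

Lemma rank_bound : (minn d (2 * c + 1) <= \rank E)%N.
Proof.
pose P k := (k <= c.+1)%N && [forall j : 'I_k, (0 < j)%N ==> (dl j == 1%N)].
have exP : exists k, P k by exists 0%N; rewrite /P leq0n; apply/forallP => -[].
have ubP : forall k, P k -> (k <= c.+1)%N by move=> k /andP[].
case: (ex_maxnP exP ubP) => K0 PK0 maxK0.
have small : forall j, (1 <= j)%N -> (j < K0)%N -> dl j = 1%N.
  move=> j j1 jK; case/andP: PK0 => _ /forallP /(_ (Ordinal jK)) /implyP.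
  by move=> /(_ j1) /eqP.
have K2 : (2 <= K0)%N.
  apply: maxK0; rewrite /P ltnS hc /=; apply/forallP => -[[|[|j]] //= _].
  by rewrite dl1.
have indK := small_indep small.
pose L k := cl (Q k) :\: cl (Q k.-1).
pose Tf k := [set:: take (minn (dl k) K0) (enum (L k))].
have cL k : (1 <= k)%N -> #|L k| = dl k.
  by case: k => // k _; rewrite /L cardD_sub //; apply: cl_Q_mono.
have cT k : (1 <= k)%N -> #|Tf k| = minn (dl k) K0.
  move=> k1; rewrite card_seq ?take_uniq ?enum_uniq // size_takel //.
  by rewrite -cardE cL // geq_minl.
have HT : forall k, (1 <= k)%N -> (k <= c.+1)%N ->
     Tf k \subset cl (Q k) :\: cl (Q k.-1) /\ rk (Tf k) = #|Tf k|.
  move=> k k1 kc; split.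
    by apply/subsetP => x; rewrite inE => /mem_take; rewrite mem_enum.
  by apply: indK; rewrite cT // geq_minr.
have [_ Hs] := chain HT (leqnn c.+1).
have := mxrankM_maxl E (colsel K (Uc Tf c.+1)) => Hr.
apply: leq_trans (leq_trans Hs Hr).
rewrite (eq_big_nat _ _ (F2 := fun k => minn (dl k) K0)); last first.
  by move=> k /andP[k1 _]; apply: cT.
have := @numeric c.+1 K0 dl isT dl1 _ _ K2.
rewrite -N_sum // NT.
have -> : (2 * c.+1 - 1 = 2 * c + 1)%N by lia.
apply.
- by move=> k k1 kc; have := dl_mono k1 kc.
- move=> k k1 kc Hk; apply: maxK0; rewrite /P kc /=.
  by apply/forallP => j; apply/implyP => j0; rewrite Hk.
Qed.

End Rank.

End Basis.
End Chain.

Unset Implicit Arguments.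

Theorem corollary2p3 (K : closedFieldType) (c d : nat) (G : 'M[K]_(d, c.+1)) :
  (1 <= c)%N -> distinct_points G -> lin_semi_uniform G ->
  (forall m : nat, (2 <= m)%N ->
     ((d <= 2 * c + 1)%N ->
        (h0_IGamma G m)%:Z = ('C(c + m, m))%:Z - d%:Z) /\
     ((2 * c + 2 <= d)%N ->
        (h0_IGamma G m)%:Z <= ('C(c + m, m))%:Z - (2 * c + 1)%:Z)) /\
  ((d <= 2 * c + 1)%N ->
     (h0_IGamma G 2)%:Z = ('C(c + 1, 2))%:Z + (c + 1)%:Z - d%:Z) /\
  ((2 * c + 2 <= d)%N -> (h0_IGamma G 2 <= 'C(c, 2))%N).
Proof.
move=> hc [Hrow Hd2] [Hsp [nu Hnu]].
have [B [_ rB rBT _]] := basis_set G [set: 'I_d].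
have spT : sub_pts G [set: 'I_d] = G by apply/matrixP => i k; rewrite !mxE inE.
have rBc : rk G B = c.+1 by rewrite rBT /rk spT Hsp.
have Hbu : uniq (enum B) := enum_uniq _.
have Hbsz : size (enum B) = c.+1 by rewrite -cardE -rB.
have Hbr : rk G [set:: enum B] = c.+1 by rewrite set_enum.
have key m : (2 <= m)%N ->
  [/\ (minn d (2 * c + 1) <= \rank (evalmx G m))%N,
      (\rank (evalmx G m) <= d)%N,
      (\rank (evalmx G m) <= 'C(c + m, m))%N &
      h0_IGamma G m = ('C(c + m, m) - \rank (evalmx G m))%N].
  move=> m2; split.
  - apply: (rank_bound Hnu Hsp Hrow Hd2 hc Hbu Hbsz Hbr).
    by move=> A' B' x xA xB; apply: sep.
  - exact: rank_leq_col.
  - by apply: leq_trans (rank_leq_row _) _; rewrite card_monom.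
  - by rewrite /h0_IGamma mxrank_ker -card_monom.
have C2 : 'C(c + 2, 2) = ('C(c, 2) + c + c.+1)%N.
  have h1 : 'C(c.+1, 1) = c.+1 by rewrite bin1.
  have h2 : 'C(c.+1, 2) = ('C(c, 2) + c)%N by rewrite binS bin1.
  by rewrite addn2 binS h1 h2.
have C2' : 'C(c + 1, 2) = ('C(c, 2) + c)%N.
  by rewrite addn1 binS bin1.
split.
  move=> m m2; have [k1 k2 k3 k4] := key m m2; rewrite k4; split => H; lia.
have [k1 k2 k3 k4] := key 2%N isT.
rewrite k4 C2 C2' in k1 k2 k3 *; split => H; lia.
Qed.
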